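(* Let $n$ be a positive integer and $\alpha,\beta\in\mathbb{R}$ with $\alpha>\beta$. Then $A_n^{\alpha,\beta}$ is symmetric positive definite, and its smallest eigenvalue $\lambda_1^{n,\alpha,\beta}$ satisfies \[ \lambda_1^{n,\alpha,\beta}\ \ge\ t_n\cdot \min_{1\le i\le n}J_{\alpha-\beta}(i)\cdot \min\{1,n^{2\beta}\}\ >\ 0 . \]
   Context: For $i,j$ positive integers, $(i,j)$ denotes the greatest common divisor and $[i,j]$ the least common multiple. For $\alpha,\beta\in\mathbb{R}$ and a positive integer $n$, $A_n^{\alpha,\beta}$ is the $n\times n$ real matrix with $(i,j)$ entry $(i,j)^{\alpha}[i,j]^{\beta}$. $E_n$ is the $n\times n$ matrix with $(E_n)_{ij}=1$ if $j\mid i$ and $(E_n)_{ij}=0$ otherwise; $t_n$ denotes the smallest eigenvalue and $T_n$ the largest eigenvalue of the symmetric matrix $E_n^{T}E_n$. For real $s$, $J_s$ is the arithmetical function $J_s(k)=k^{s}\prod_{p\mid k}\left(1-p^{-s}\right)$ (product over primes $p$ dividing $k$), equivalently $J_s(k)=\sum_{d\mid k} d^{s}\mu(k/d)$ where $\mu$ is the Möbius function. *)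

(* Defs.v *)
From Stdlib Require Import Reals Lra Lia Arith ZArith Znumtheory.
Open Scope R_scope.

(* Vectors and n x n matrices are indexed by 1..n (as in the paper):
   a vector is a function nat -> R, a matrix nat -> nat -> R; only the
   entries with indices in 1..n matter. *)

Fixpoint rsum (n : nat) (f : nat -> R) : R :=
  match n with
  | O => 0
  | S k => rsum k f + f (S k)
  end.

Fixpoint rprod (n : nat) (f : nat -> R) : R :=
  match n with
  | O => 1
  | S k => rprod k f * f (S k)
  end.

(* rmin1 m f = min_{1 <= i <= m+1} f i ; so min_{1<=i<=n} f i = rmin1 (n-1) f *)
Fixpoint rmin1 (m : nat) (f : nat -> R) : R :=
  match m with
  | O => f 1%nat
  | S m' => Rmin (rmin1 m' f) (f (S (S m')))
  end.

Definition min_1_to (n : nat) (f : nat -> R) : R := rmin1 (n - 1) f.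

Definition Amat (alpha beta : R) (i j : nat) : R :=
  Rpower (INR (Nat.gcd i j)) alpha * Rpower (INR (Nat.lcm i j)) beta.

Definition Emat (i j : nat) : R :=
  if Nat.eqb (i mod j) 0 then 1 else 0.

Definition EtE (n : nat) (i j : nat) : R :=
  rsum n (fun k => Emat k i * Emat k j).

Definition Jordan (s : R) (k : nat) : R :=
  Rpower (INR k) s *
  rprod k (fun p =>
    if prime_dec (Z.of_nat p) then
      (if Nat.eqb (k mod p) 0 then 1 - Rpower (INR p) (- s) else 1)
    else 1).

Definition symmetric_mat (n : nat) (M : nat -> nat -> R) : Prop :=
  forall i j, (1 <= i <= n)%nat -> (1 <= j <= n)%nat -> M i j = M j i.

Definition nonzero_vec (n : nat) (x : nat -> R) : Prop :=
  exists i, (1 <= i <= n)%nat /\ x i <> 0.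

Definition quad_form (n : nat) (M : nat -> nat -> R) (x : nat -> R) : R :=
  rsum n (fun i => rsum n (fun j => x i * M i j * x j)).

Definition sym_pos_def (n : nat) (M : nat -> nat -> R) : Prop :=
  symmetric_mat n M /\ forall x, nonzero_vec n x -> quad_form n M x > 0.

Definition is_eigenvalue (n : nat) (M : nat -> nat -> R) (lam : R) : Prop :=
  exists v, nonzero_vec n v /\
    forall i, (1 <= i <= n)%nat -> rsum n (fun j => M i j * v j) = lam * v i.

Definition is_smallest_eigenvalue (n : nat) (M : nat -> nat -> R) (lam : R) : Prop :=
  is_eigenvalue n M lam /\ forall mu, is_eigenvalue n M mu -> lam <= mu.

(* Main.v *)
Require Import Defs.
From Stdlib Require Import Reals Lra Lia Arith ZArith Znumtheory Classical.
Open Scope R_scope.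

Module MC.
From HB Require Import structures.
From mathcomp Require Import all_boot all_order all_algebra.
From mathcomp Require Import all_classical all_reals all_analysis.
From mathcomp Require Import lra.
From mathcomp Require Import Rstruct Rstruct_topology.
Import Order.TTheory GRing.Theory Num.Theory.
Import numFieldNormedType.Exports.
Local Open Scope classical_set_scope.
Local Open Scope ring_scope.

Lemma min_sphere_mc (R : realType) (n : nat) (M : 'I_n.+1 -> 'I_n.+1 -> R) :
  exists c : 'rV[R]_n.+1,
   (\sum_(k < n.+1) c ord0 k * c ord0 k = 1) /\
   forall x : 'rV[R]_n.+1, \sum_(k < n.+1) x ord0 k * x ord0 k = 1 ->
     \sum_(k < n.+1) \sum_(l < n.+1) (c ord0 k * M k l * c ord0 l) <=
     \sum_(k < n.+1) \sum_(l < n.+1) (x ord0 k * M k l * x ord0 l).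
Proof.
set S := [set x : 'rV[R]_n.+1 | \sum_(k < n.+1) x ord0 k * x ord0 k = 1].
have addc : continuous (fun x : R * R => x.1 + x.2).
  exact: add_continuous.
have ccoord : forall k, continuous (fun x : 'rV[R]_n.+1 => x ord0 k).
  by move=> k; exact: coord_continuous.
have cc : forall c : R, continuous (fun x : 'rV[R]_n.+1 => c).
  by move=> c; exact: cst_continuous.
have cq : continuous (fun x : 'rV[R]_n.+1 => \sum_(k < n.+1) x ord0 k * x ord0 k).
  apply: (continuous_big addc) => k _ x.
  exact: (continuousM (ccoord k x) (ccoord k x)).
have cQ : continuous (fun x : 'rV[R]_n.+1 =>
   \sum_(k < n.+1) \sum_(l < n.+1) (x ord0 k * M k l * x ord0 l)).
  apply: (continuous_big addc) => k _; apply: (continuous_big addc) => l _.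
  have ck0 : continuous (fun x : 'rV[R]_n.+1 => x ord0 k * M k l).
    move=> x; exact: (continuousM (ccoord k x) (cc _ x)).
  move=> x; exact: (continuousM (ck0 x) (ccoord l x)).
have Scl : closed S.
  apply: (@preimage_closed _ _ (fun x : 'rV[R]_n.+1 => \sum_(k < n.+1) x ord0 k * x ord0 k) [set 1]).
    by move=> x _; exact: cq.
  exact: closed_eq.
have Sco : compact S.
  have Bco : compact [set v : 'rV[R]_n.+1 | forall i, `[(-1 : R), 1]%classic (v ord0 i)].
    exact: (@rV_compact _ n.+1 (fun=> `[(-1 : R), 1]%classic) (fun=> @segment_compact R (-1) 1)).
  apply: (subclosed_compact Scl Bco).
  move=> x Sx i /=.
  rewrite in_itv /=.
  have : x ord0 i * x ord0 i <= 1.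
    rewrite -Sx (bigD1 i) //= lerDl.
    by apply: sumr_ge0 => j _; rewrite -expr2 sqr_ge0.
  by move=> h; apply/andP; split; nra.
have S0 : S !=set0.
  exists (\row_(k < n.+1) (k == ord0)%:R).
  rewrite /S /= (bigD1 ord0) //= !mxE eqxx mulr1 big1 ?addr0 // => k kn.
  by rewrite !mxE (negbTE kn) mulr0.
have [c cS cmin] := @EVT_min_rV R n.+1 _ S S0 Sco (continuous_subspaceT cQ).
exists c; split.
  by move: cS; rewrite inE.
by move=> x Sx; apply: cmin; rewrite inE.
Qed.

Lemma rsum_big (n : nat) (f : nat -> R) : rsum n f = \sum_(k < n) f k.+1.
Proof.
elim: n => [|n IH]; first by rewrite big_ord0.
by rewrite big_ord_recr /= IH.
Qed.

Lemma min_sphere0 (n : nat) (M : nat -> nat -> R) : (0 < n)%N ->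
  exists v : nat -> R, rsum n (fun i => Rmult (v i) (v i)) = 1 /\
    forall x : nat -> R, rsum n (fun i => Rmult (x i) (x i)) = 1 ->
      Rle (quad_form n M v) (quad_form n M x).
Proof.
case: n => [//|n] _.
have [c [c1 cmin]] := @min_sphere_mc R n (fun k l => M k.+1 l.+1).
exists (fun i => c ord0 (inord i.-1)).
have E : forall (y : 'rV[R]_n.+1), quad_form n.+1 M (fun i => y ord0 (inord i.-1)) =
   \sum_(k < n.+1) \sum_(l < n.+1) (y ord0 k * M k.+1 l.+1 * y ord0 l).
  move=> y; rewrite /quad_form rsum_big; apply: eq_bigr => k _.
  rewrite rsum_big; apply: eq_bigr => l _ /=.
  by rewrite !inord_val.
split.
  rewrite rsum_big -c1; apply: eq_bigr => k _ /=; by rewrite inord_val.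
move=> x x1.
pose w : 'rV[R]_n.+1 := \row_k x k.+1.
have Hx : quad_form n.+1 M x = quad_form n.+1 M (fun i => w ord0 (inord i.-1)).
  rewrite /quad_form !rsum_big; apply: eq_bigr => k _.
  rewrite !rsum_big; apply: eq_bigr => l _ /=.
  by rewrite /w !mxE !inord_val.
rewrite Hx !E; apply/RleP; apply: cmin.
rewrite -x1 rsum_big; apply: eq_bigr => k _; by rewrite /w mxE.
Qed.
Lemma min_sphere1 (n : nat) (M : nat -> nat -> R) : Peano.le 1 n ->
  exists v : nat -> R, rsum n (fun i => Rmult (v i) (v i)) = 1 /\
    forall x : nat -> R, rsum n (fun i => Rmult (x i) (x i)) = 1 ->
      Rle (quad_form n M v) (quad_form n M x).
Proof. by move=> /ssrnat.leP; exact: min_sphere0. Qed.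
End MC.

Lemma min_sphere (n : nat) (M : nat -> nat -> R) : (1 <= n)%nat ->
  exists v : nat -> R, rsum n (fun i => v i * v i) = 1 /\
    forall x : nat -> R, rsum n (fun i => x i * x i) = 1 ->
      quad_form n M v <= quad_form n M x.
Proof. exact (MC.min_sphere1 n M). Qed.


Lemma rsum_ext n f g : (forall i, (1 <= i <= n)%nat -> f i = g i) -> rsum n f = rsum n g.
Proof.
  induction n; simpl; intros H; [reflexivity|].
  rewrite IHn by (intros; apply H; lia). rewrite H by lia. reflexivity.
Qed.

Lemma rsum_plus n f g : rsum n (fun i => f i + g i) = rsum n f + rsum n g.
Proof. induction n; simpl; [lra|]. rewrite IHn. lra. Qed.

Lemma rsum_scal n c f : rsum n (fun i => c * f i) = c * rsum n f.
Proof. induction n; simpl; [lra|]. rewrite IHn. lra. Qed.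

Lemma rsum_zero n : rsum n (fun _ => 0) = 0.
Proof. induction n; simpl; [lra|]. rewrite IHn. lra. Qed.

Lemma rsum_zero' n f : (forall i, (1 <= i <= n)%nat -> f i = 0) -> rsum n f = 0.
Proof. intros H. rewrite (rsum_ext n f (fun _ => 0)) by exact H. apply rsum_zero. Qed.

Lemma rsum_swap n m f :
  rsum n (fun i => rsum m (fun j => f i j)) = rsum m (fun j => rsum n (fun i => f i j)).
Proof.
  induction n; simpl.
  - symmetry. apply rsum_zero.
  - rewrite IHn. rewrite <- rsum_plus. reflexivity.
Qed.

Lemma rsum_le n f g : (forall i, (1 <= i <= n)%nat -> f i <= g i) -> rsum n f <= rsum n g.
Proof.
  induction n; simpl; intros H; [lra|].
  assert (rsum n f <= rsum n g) by (apply IHn; intros; apply H; lia).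
  assert (f (S n) <= g (S n)) by (apply H; lia). lra.
Qed.

Lemma rsum_nonneg n f : (forall i, (1 <= i <= n)%nat -> 0 <= f i) -> 0 <= rsum n f.
Proof. intros H. rewrite <- (rsum_zero n). apply rsum_le. exact H. Qed.

Lemma rsum_ge_term n f k : (forall i, (1 <= i <= n)%nat -> 0 <= f i) ->
  (1 <= k <= n)%nat -> f k <= rsum n f.
Proof.
  induction n; intros H Hk; [lia|]. simpl.
  destruct (Nat.eq_dec k (S n)) as [->|Hne].
  - assert (0 <= rsum n f) by (apply rsum_nonneg; intros; apply H; lia). lra.
  - assert (f k <= rsum n f) by (apply IHn; [intros; apply H; lia|lia]).
    assert (0 <= f (S n)) by (apply H; lia). lra.
Qed.

Lemma rsum_sq_zero n x : rsum n (fun i => x i * x i) = 0 ->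
  forall i, (1 <= i <= n)%nat -> x i = 0.
Proof.
  intros H i Hi.
  assert (x i * x i <= 0).
  { rewrite <- H. apply (rsum_ge_term n (fun i => x i * x i)); auto.
    intros; nra. }
  nra.
Qed.

Lemma rsum_split a b f : rsum (a + b) f = rsum a f + rsum b (fun i => f (a + i)%nat).
Proof.
  induction b; simpl.
  - rewrite Nat.add_0_r. lra.
  - rewrite <- plus_n_Sm. simpl. rewrite IHb. lra.
Qed.

Lemma rsum_single n k f : (1 <= k <= n)%nat ->
  (forall i, (1 <= i <= n)%nat -> i <> k -> f i = 0) -> rsum n f = f k.
Proof.
  induction n; intros Hk H; [lia|]. simpl.
  destruct (Nat.eq_dec k (S n)) as [->|Hne].
  - rewrite rsum_zero' by (intros; apply H; lia). lra.
  - rewrite IHn by (intros; try apply H; lia). rewrite (H (S n)) by lia. lra.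
Qed.

Lemma rsum_trunc n N f : (n <= N)%nat -> (forall i, (n < i <= N)%nat -> f i = 0) ->
  rsum N f = rsum n f.
Proof.
  intros HN H. replace N with (n + (N - n))%nat by lia.
  rewrite rsum_split. rewrite (rsum_zero' (N - n)). lra.
  intros i Hi. apply H. lia.
Qed.

Lemma rsum_mult n m f g :
  rsum n f * rsum m g = rsum n (fun i => rsum m (fun j => f i * g j)).
Proof.
  transitivity (rsum n (fun i => rsum m g * f i)).
  { rewrite (rsum_scal n (rsum m g) f). ring. }
  apply rsum_ext. intros i _. rewrite Rmult_comm, <- rsum_scal. reflexivity.
Qed.

Definition norm2 n (x : nat -> R) := rsum n (fun i => x i * x i).
Definition matvec n (M : nat -> nat -> R) (x : nat -> R) i := rsum n (fun j => M i j * x j).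
Definition bil n (M : nat -> nat -> R) (x y : nat -> R) :=
  rsum n (fun i => rsum n (fun j => x i * M i j * y j)).

Lemma norm2_nonneg n x : 0 <= norm2 n x.
Proof. apply rsum_nonneg. intros. nra. Qed.

Lemma bil_matvec n M x y : bil n M x y = rsum n (fun i => x i * matvec n M y i).
Proof.
  unfold bil, matvec. apply rsum_ext. intros i _. rewrite <- rsum_scal.
  apply rsum_ext. intros. lra.
Qed.

Lemma bil_sym n M x y : symmetric_mat n M -> bil n M x y = bil n M y x.
Proof.
  intros HM. unfold bil. rewrite rsum_swap. apply rsum_ext. intros i Hi.
  apply rsum_ext. intros j Hj. rewrite (HM j i) by lia. lra.
Qed.

Lemma quad_bil n M x : quad_form n M x = bil n M x x.
Proof. reflexivity. Qed.

Ltac rsum_lin := repeat (rewrite ?rsum_plus, ?rsum_scal).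

Lemma quad_expand n M x y t :
  quad_form n M (fun i => x i + t * y i) =
  quad_form n M x + t * (bil n M x y + bil n M y x) + t * t * quad_form n M y.
Proof.
  unfold quad_form, bil.
  transitivity (rsum n (fun i => rsum n (fun j => x i * M i j * x j) + t * (rsum n (fun j => x i * M i j * y j) + rsum n (fun j => y i * M i j * x j)) + t * t * rsum n (fun j => y i * M i j * y j))).
  { apply rsum_ext; intros i _.
    transitivity (rsum n (fun j => x i * M i j * x j + t * (x i * M i j * y j + y i * M i j * x j) + t*t*(y i * M i j * y j))).
    { apply rsum_ext; intros; ring. }
    rsum_lin. ring. }
  rsum_lin. ring.
Qed.

Lemma norm2_expand n x y t :
  norm2 n (fun i => x i + t * y i) =
  norm2 n x + t * (2 * rsum n (fun i => x i * y i)) + t * t * norm2 n y.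
Proof.
  unfold norm2.
  transitivity (rsum n (fun i => x i * x i + t * (2 * (x i * y i)) + t * t * (y i * y i))).
  { apply rsum_ext; intros; ring. }
  rsum_lin. ring.
Qed.

Lemma quad_scal n M x c : quad_form n M (fun i => c * x i) = c * c * quad_form n M x.
Proof.
  unfold quad_form.
  transitivity (rsum n (fun i => c * c * rsum n (fun j => x i * M i j * x j))).
  { apply rsum_ext; intros.
    transitivity (rsum n (fun j => c * c * (x i * M i j * x j))).
    { apply rsum_ext; intros; ring. }
    rsum_lin. ring. }
  rsum_lin. ring.
Qed.

Lemma norm2_scal n x c : norm2 n (fun i => c * x i) = c * c * norm2 n x.
Proof.
  unfold norm2. transitivity (rsum n (fun i => c * c * (x i * x i))).
  { apply rsum_ext; intros; ring. }
  rsum_lin. ring.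
Qed.


Lemma quad_zero_vec n M x : (forall i, (1 <= i <= n)%nat -> x i = 0) -> quad_form n M x = 0.
Proof.
  intros H. unfold quad_form. apply rsum_zero'. intros i Hi. rewrite H by exact Hi.
  apply rsum_zero'. intros. lra.
Qed.

Lemma lin_zero a b : (forall t, 0 <= 2 * t * a + t * t * b) -> a = 0.
Proof.
  intros H. destruct (Req_dec a 0) as [|Ha]; [assumption|exfalso].
  set (B := Rabs b + 1).
  assert (HB : 0 < B) by (unfold B; pose proof (Rabs_pos b); lra).
  assert (Hb : b <= B) by (unfold B; pose proof (Rle_abs b); lra).
  set (t := - a / B).
  specialize (H t).
  assert (t * t * b <= t * t * B) by (apply Rmult_le_compat_l; [nra|exact Hb]).
  assert (Ht1 : t * t * B = a * a / B) by (unfold t; field; lra).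
  assert (Ht2 : 2 * t * a = - 2 * (a * a / B)) by (unfold t; field; lra).
  assert (0 < a * a / B) by (apply Rdiv_lt_0_compat; nra).
  lra.
Qed.

Lemma rayleigh n M : (1 <= n)%nat -> symmetric_mat n M ->
  exists v lam, norm2 n v = 1 /\ quad_form n M v = lam /\
    (forall x, quad_form n M x >= lam * norm2 n x) /\
    (forall i, (1 <= i <= n)%nat -> matvec n M v i = lam * v i).
Proof.
  intros Hn HM.
  destruct (min_sphere n M Hn) as [v [Hv Hmin]]. change (norm2 n v = 1) in Hv.
  exists v, (quad_form n M v).
  assert (Hall : forall x, quad_form n M x >= quad_form n M v * norm2 n x).
  { intros x.
    destruct (Req_dec (norm2 n x) 0) as [H0|H0].
    - rewrite (quad_zero_vec n M x) by (apply rsum_sq_zero; exact H0). rewrite H0. lra.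
    - pose proof (norm2_nonneg n x) as Hp.
      assert (Hpos : 0 < norm2 n x) by lra.
      set (c := / sqrt (norm2 n x)).
      assert (Hs : 0 < sqrt (norm2 n x)) by (apply sqrt_lt_R0; lra).
      assert (Hss : sqrt (norm2 n x) * sqrt (norm2 n x) = norm2 n x) by (apply sqrt_sqrt; lra).
      assert (Hcc : c * c * norm2 n x = 1).
      { unfold c. rewrite <- Hss at 3. field. lra. }
      pose proof (Hmin (fun i => c * x i)) as Hm.
      unfold norm2 in Hm. fold (norm2 n (fun i => c * x i)) in Hm.
      rewrite norm2_scal, quad_scal in Hm. specialize (Hm Hcc).
      assert (H1 : quad_form n M v * norm2 n x <= c * c * quad_form n M x * norm2 n x)
        by (apply Rmult_le_compat_r; lra).
      assert (H2 : c * c * quad_form n M x * norm2 n x = quad_form n M x).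
      { transitivity (quad_form n M x * (c * c * norm2 n x)); [ring|rewrite Hcc; ring]. }
      lra. }
  split; [exact Hv|]. split; [reflexivity|]. split; [exact Hall|].
  set (lam := quad_form n M v).
  set (r := fun i => matvec n M v i - lam * v i).
  assert (Hr : norm2 n r = 0).
  { assert (Ha : bil n M r v - lam * rsum n (fun i => r i * v i) = 0).
    { apply (lin_zero _ (quad_form n M r - lam * norm2 n r)). intros t.
      pose proof (Hall (fun i => v i + t * r i)) as Ht.
      rewrite quad_expand, norm2_expand in Ht.
      rewrite (bil_sym n M v r HM) in Ht.
      assert (Hvr : rsum n (fun i => v i * r i) = rsum n (fun i => r i * v i))
        by (apply rsum_ext; intros; ring).
      rewrite Hvr in Ht. fold lam in Ht. rewrite Hv in Ht. nra. }
    rewrite bil_matvec in Ha. rewrite <- rsum_scal in Ha.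
    rewrite <- Ha. unfold norm2. rewrite <- (Rplus_0_r (rsum n (fun i => r i * r i))).
    unfold Rminus. rewrite <- (rsum_zero n).
    replace (rsum n (fun i => r i * matvec n M v i) + - rsum n (fun i => lam * (r i * v i)))
      with (rsum n (fun i => r i * matvec n M v i) + rsum n (fun i => -1 * (lam * (r i * v i))))
      by (rewrite rsum_scal; ring).
    rewrite <- !rsum_plus. apply rsum_ext. intros. unfold r. ring. }
  intros i Hi. pose proof (rsum_sq_zero n r Hr i Hi) as H. unfold r in H. lra.
Qed.

Lemma nonzero_norm2 n x : nonzero_vec n x -> 0 < norm2 n x.
Proof.
  intros [i [Hi Hx]].
  assert (x i * x i <= norm2 n x) by (apply (rsum_ge_term n (fun i => x i * x i)); [intros; nra|exact Hi]).
  assert (0 < x i * x i) by nra. lra.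
Qed.

Lemma smallest_eig n M : (1 <= n)%nat -> symmetric_mat n M ->
  exists lam, is_smallest_eigenvalue n M lam /\
    (forall x, quad_form n M x >= lam * norm2 n x) /\
    exists v, norm2 n v = 1 /\ quad_form n M v = lam.
Proof.
  intros Hn HM.
  destruct (rayleigh n M Hn HM) as [v [lam [Hv [Hq [Hall Heig]]]]].
  exists lam. split; [split|split; [exact Hall|exists v; auto]].
  - exists v. split; [|exact Heig].
    destruct (classic (exists i, (1 <= i <= n)%nat /\ v i <> 0)) as [H|H]; [exact H|].
    exfalso. assert (norm2 n v = 0).
    { unfold norm2. apply rsum_zero'. intros i Hi.
      destruct (Req_dec (v i) 0) as [->|Hne]; [lra|]. exfalso; apply H; exists i; auto. }
    lra.
  - intros mu [u [Hu Hmu]].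
    assert (Hq2 : quad_form n M u = mu * norm2 n u).
    { rewrite quad_bil, bil_matvec. unfold norm2. rewrite <- rsum_scal.
      apply rsum_ext. intros i Hi. unfold matvec. rewrite Hmu by exact Hi. ring. }
    pose proof (Hall u). pose proof (nonzero_norm2 n u Hu).
    apply (Rmult_le_reg_r (norm2 n u)); [assumption|]. lra.
Qed.


Definition primeN (q : nat) := prime (Z.of_nat q).

Lemma divide_Z a b : Nat.divide a b <-> Z.divide (Z.of_nat a) (Z.of_nat b).
Proof.
  split.
  - intros [k ->]. exists (Z.of_nat k). apply Nat2Z.inj_mul.
  - intros H. destruct (Nat.eq_dec a 0) as [->|Ha].
    + destruct H as [z Hz]. simpl in Hz. rewrite Z.mul_0_r in Hz. exists 0%nat. lia.
    + apply Nat.mod_divide; [exact Ha|]. apply Nat2Z.inj. rewrite Nat2Z.inj_mod.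
      simpl. apply Zdivide_mod. exact H.
Qed.

Lemma primeN_ge2 q : primeN q -> (2 <= q)%nat.
Proof. intros H. apply prime_ge_2 in H. lia. Qed.

Lemma primeN_mult q a b : primeN q -> Nat.divide q (a * b) -> Nat.divide q a \/ Nat.divide q b.
Proof.
  intros Hq H. apply divide_Z in H. rewrite Nat2Z.inj_mul in H.
  destruct (prime_mult _ Hq _ _ H) as [H1|H1]; [left|right]; apply divide_Z; exact H1.
Qed.

Lemma primeN_div q p : primeN q -> primeN p -> Nat.divide q p -> q = p.
Proof.
  intros Hq Hp H. apply divide_Z in H. apply Nat2Z.inj. apply prime_div_prime; assumption.
Qed.

Lemma coprime_div p d k : primeN p -> ~ Nat.divide p d -> Nat.divide d (p * k) -> Nat.divide d k.
Proof.
  intros Hp Hpd H. apply divide_Z. apply divide_Z in H. rewrite Nat2Z.inj_mul in H.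
  apply (Gauss _ (Z.of_nat p)); [exact H|].
  apply rel_prime_sym. apply prime_rel_prime; [exact Hp|].
  intros H'. apply Hpd. apply divide_Z. exact H'.
Qed.

Lemma prime_divisor_exists m : (2 <= m)%nat -> exists p, primeN p /\ Nat.divide p m.
Proof.
  induction m as [m IH] using lt_wf_ind. intros Hm.
  destruct (prime_dec (Z.of_nat m)) as [Hp|Hp].
  - exists m. split; [exact Hp|apply Nat.divide_refl].
  - destruct (not_prime_divide (Z.of_nat m)) as [z [Hz Hzm]]; [lia|exact Hp|].
    destruct (IH (Z.to_nat z)) as [p [Hp1 Hp2]]; [lia|lia|].
    exists p. split; [exact Hp1|]. apply (Nat.divide_trans _ (Z.to_nat z)); [exact Hp2|].
    apply divide_Z. rewrite Z2Nat.id by lia. exact Hzm.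
Qed.

Lemma Emat_cases m d : d <> 0%nat ->
  (Nat.divide d m /\ Emat m d = 1) \/ (~ Nat.divide d m /\ Emat m d = 0).
Proof.
  intros Hd. unfold Emat. destruct (Nat.eqb_spec (m mod d) 0) as [H|H].
  - left. split; [apply Nat.mod_divide; assumption|reflexivity].
  - right. split; [|reflexivity]. intros H'. apply H. apply Nat.mod_divide; assumption.
Qed.

Lemma Emat_gt m d : (1 <= m < d)%nat -> Emat m d = 0.
Proof.
  intros H. unfold Emat. rewrite Nat.mod_small by lia.
  destruct (Nat.eqb_spec m 0); [lia|reflexivity].
Qed.

Lemma Emat_diag m : (1 <= m)%nat -> Emat m m = 1.
Proof.
  intros H. unfold Emat. rewrite Nat.mod_same by lia. reflexivity.
Qed.

Lemma eqb_mod_iff q a b : q <> 0%nat -> (Nat.divide q a <-> Nat.divide q b) ->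
  Nat.eqb (a mod q) 0 = Nat.eqb (b mod q) 0.
Proof.
  intros Hq H.
  destruct (Nat.eqb_spec (a mod q) 0) as [Ha|Ha]; destruct (Nat.eqb_spec (b mod q) 0) as [Hb|Hb];
    try reflexivity.
  - exfalso. apply Hb. apply Nat.mod_divide; [exact Hq|]. apply H. apply Nat.mod_divide; assumption.
  - exfalso. apply Ha. apply Nat.mod_divide; [exact Hq|]. apply H. apply Nat.mod_divide; assumption.
Qed.

Lemma rprod_ext n f g : (forall i, (1 <= i <= n)%nat -> f i = g i) -> rprod n f = rprod n g.
Proof.
  induction n; simpl; intros H; [reflexivity|].
  rewrite IHn by (intros; apply H; lia). rewrite H by lia. reflexivity.
Qed.

Lemma rprod_one n f : (forall i, (1 <= i <= n)%nat -> f i = 1) -> rprod n f = 1.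
Proof.
  induction n; simpl; intros H; [reflexivity|].
  rewrite IHn by (intros; apply H; lia). rewrite H by lia. ring.
Qed.

Lemma rprod_trunc n N f : (n <= N)%nat -> (forall i, (n < i <= N)%nat -> f i = 1) ->
  rprod N f = rprod n f.
Proof.
  intros HN. induction N; intros H.
  - replace n with 0%nat by lia. reflexivity.
  - destruct (Nat.eq_dec n (S N)) as [->|Hne]; [reflexivity|].
    simpl. rewrite IHN by (try lia; intros; apply H; lia). rewrite H by lia. ring.
Qed.

Lemma rprod_onediff L p c f g : (1 <= p <= L)%nat ->
  (forall q, (1 <= q <= L)%nat -> q <> p -> f q = g q) -> f p = c * g p ->
  rprod L f = c * rprod L g.
Proof.
  induction L; intros Hp H Hfp; [lia|]. simpl.
  destruct (Nat.eq_dec p (S L)) as [->|Hne].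
  - rewrite (rprod_ext L f g) by (intros; apply H; lia). rewrite Hfp. ring.
  - rewrite IHL by (try exact Hfp; try lia; intros; apply H; lia). rewrite (H (S L)) by lia. ring.
Qed.

Lemma rprod_pos n f : (forall i, (1 <= i <= n)%nat -> 0 < f i) -> 0 < rprod n f.
Proof.
  induction n; simpl; intros H; [lra|].
  apply Rmult_lt_0_compat; [apply IHn; intros; apply H; lia|apply H; lia].
Qed.

Definition Pr (s : R) (L k : nat) : R :=
  rprod L (fun p =>
    if prime_dec (Z.of_nat p) then
      (if Nat.eqb (k mod p) 0 then 1 - Rpower (INR p) (- s) else 1)
    else 1).

Lemma J_def s k : Jordan s k = Rpower (INR k) s * Pr s k k.
Proof. reflexivity. Qed.

Lemma Rpower_one s : Rpower 1 s = 1.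
Proof. unfold Rpower. rewrite ln_1, Rmult_0_r. apply exp_0. Qed.

Lemma Rpower_pos x s : 0 < Rpower x s.
Proof. unfold Rpower. apply exp_pos. Qed.

Lemma Pr_trunc s L k : (1 <= k <= L)%nat -> Pr s L k = Pr s k k.
Proof.
  intros H. unfold Pr. apply rprod_trunc; [lia|]. intros q Hq.
  destruct (prime_dec (Z.of_nat q)); [|reflexivity].
  rewrite Nat.mod_small by lia. destruct (Nat.eqb_spec k 0); [lia|reflexivity].
Qed.

Lemma Pr_pdiv s L p k : primeN p -> Nat.divide p k -> Pr s L (p * k) = Pr s L k.
Proof.
  intros Hp Hpk. unfold Pr. apply rprod_ext. intros q Hq.
  destruct (prime_dec (Z.of_nat q)) as [Hq'|]; [|reflexivity].
  rewrite (eqb_mod_iff q (p * k) k); [reflexivity|lia|].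
  split.
  - intros H. destruct (primeN_mult q p k Hq' H) as [H1|H1]; [|exact H1].
    rewrite (primeN_div q p Hq' Hp H1). exact Hpk.
  - intros H. apply Nat.divide_mul_r. exact H.
Qed.

Lemma Pr_pndiv s L p k : primeN p -> ~ Nat.divide p k -> (p <= L)%nat ->
  Pr s L (p * k) = (1 - Rpower (INR p) (- s)) * Pr s L k.
Proof.
  intros Hp Hpk HL. unfold Pr.
  pose proof (primeN_ge2 p Hp) as Hp2.
  apply (rprod_onediff L p); [lia| |].
  - intros q Hq Hqp. destruct (prime_dec (Z.of_nat q)) as [Hq'|]; [|reflexivity].
    rewrite (eqb_mod_iff q (p * k) k); [reflexivity|lia|].
    split.
    + intros H. destruct (primeN_mult q p k Hq' H) as [H1|H1]; [|exact H1].
      exfalso. apply Hqp. exact (primeN_div q p Hq' Hp H1).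
    + intros H. apply Nat.divide_mul_r. exact H.
  - destruct (prime_dec (Z.of_nat p)) as [_|Hn]; [|contradiction].
    rewrite Nat.mul_comm, Nat.Div0.mod_mul. simpl.
    destruct (Nat.eqb_spec (k mod p) 0) as [H|H].
    + exfalso. apply Hpk. apply Nat.mod_divide; [lia|exact H].
    + ring.
Qed.

Lemma J_one s : Jordan s 1 = 1.
Proof.
  rewrite J_def. unfold Pr. simpl. rewrite Rpower_one.
  destruct (prime_dec 1) as [H|H].
  - apply prime_ge_2 in H. lia.
  - ring.
Qed.

Lemma J_mul_p s p k : primeN p -> (1 <= k)%nat ->
  Jordan s (p * k) = Rpower (INR p) s * Jordan s k - (1 - Emat k p) * Jordan s k.
Proof.
  intros Hp Hk. pose proof (primeN_ge2 p Hp).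
  rewrite !J_def. rewrite mult_INR.
  rewrite <- Rpower_mult_distr by (apply lt_0_INR; lia).
  destruct (Emat_cases k p) as [[Hd ->]|[Hd ->]]; [lia| |].
  - rewrite Pr_pdiv by assumption. rewrite (Pr_trunc s (p * k) k) by nia. ring.
  - rewrite Pr_pndiv by (try assumption; nia). rewrite (Pr_trunc s (p * k) k) by nia.
    rewrite Rpower_Ropp. pose proof (Rpower_pos (INR p) s). field. lra.
Qed.

Lemma J_pos s k : 0 < s -> (1 <= k)%nat -> 0 < Jordan s k.
Proof.
  intros Hs Hk. rewrite J_def. apply Rmult_lt_0_compat; [apply Rpower_pos|].
  unfold Pr. apply rprod_pos. intros q Hq.
  destruct (prime_dec (Z.of_nat q)) as [Hq'|]; [|lra].
  destruct (Nat.eqb (k mod q) 0); [|lra].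
  pose proof (primeN_ge2 q Hq').
  assert (Hln : 0 < ln (INR q)).
  { rewrite <- ln_1. apply ln_increasing; [lra|]. apply lt_1_INR. lia. }
  unfold Rpower. assert (exp (- s * ln (INR q)) < exp 0) by (apply exp_increasing; nra).
  rewrite exp_0 in H0. lra.
Qed.

Definition Fsum s N m := rsum N (fun d => Emat m d * Jordan s d).

Lemma Fsum_trunc s N m : (1 <= m <= N)%nat -> Fsum s N m = Fsum s m m.
Proof.
  intros H. unfold Fsum. apply rsum_trunc; [lia|]. intros d Hd.
  rewrite Emat_gt by lia. ring.
Qed.

Lemma multiples_sum p M g : (1 <= p)%nat ->
  rsum (p * M) (fun d => Emat d p * g d) = rsum M (fun e => g (p * e)%nat).
Proof.
  intros Hp. induction M.
  - rewrite Nat.mul_0_r. reflexivity.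
  - rewrite Nat.mul_succ_r, rsum_split, IHM. simpl (rsum (S M) _). f_equal.
    rewrite (rsum_single p p).
    + unfold Emat. replace (p * M + p)%nat with (p * S M)%nat by lia.
      rewrite (Nat.mul_comm p (S M)), Nat.Div0.mod_mul. simpl. ring.
    + lia.
    + intros r Hr Hrp. unfold Emat.
      replace (p * M + r)%nat with (r + M * p)%nat by lia.
      rewrite Nat.mod_add by lia. rewrite Nat.mod_small by lia.
      destruct (Nat.eqb_spec r 0); [lia|ring].
Qed.


Lemma divsum_main s m : (1 <= m)%nat -> Fsum s m m = Rpower (INR m) s.
Proof.
  induction m as [m IH] using lt_wf_ind. intros Hm.
  destruct (Nat.eq_dec m 1) as [->|Hm1].
  - unfold Fsum. simpl. rewrite J_one, Emat_diag by lia. simpl. rewrite Rpower_one. ring.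
  - destruct (prime_divisor_exists m) as [p [Hp [k Hk]]]; [lia|].
    pose proof (primeN_ge2 p Hp) as Hp2.
    assert (Hk1 : (1 <= k)%nat) by nia.
    assert (Hkm : (k < m)%nat) by nia.
    specialize (IH k Hkm Hk1).
    subst m. rewrite Nat.mul_comm. clear Hm1 Hm Hkm.
    unfold Fsum.
    set (J := Jordan s).
    transitivity (rsum (p * k) (fun d => Emat (p * k) d * (1 - Emat d p) * J d)
                  + rsum (p * k) (fun d => Emat d p * (Emat (p * k) d * J d))).
    { rewrite <- rsum_plus. apply rsum_ext. intros. ring. }
    assert (HP1 : rsum (p * k) (fun d => Emat (p * k) d * (1 - Emat d p) * J d)
                = rsum k (fun d => Emat k d * (1 - Emat d p) * J d)).
    { transitivity (rsum (p * k) (fun d => Emat k d * (1 - Emat d p) * J d)).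
      - apply rsum_ext. intros d Hd.
        destruct (Emat_cases d p) as [[Hdp ->]|[Hdp ->]]; [lia|ring|].
        destruct (Emat_cases (p * k) d) as [[H1 ->]|[H1 ->]]; [lia| |];
        destruct (Emat_cases k d) as [[H2 ->]|[H2 ->]]; try lia; try ring.
        + exfalso. apply H2. exact (coprime_div p d k Hp Hdp H1).
        + exfalso. apply H1. apply Nat.divide_mul_r. exact H2.
      - apply rsum_trunc; [nia|]. intros d Hd. rewrite Emat_gt by lia. ring. }
    assert (HP2 : rsum (p * k) (fun d => Emat d p * (Emat (p * k) d * J d))
                = rsum k (fun e => Emat k e * (Rpower (INR p) s * J e - (1 - Emat e p) * J e))).
    { rewrite multiples_sum by lia. apply rsum_ext. intros e He.
      unfold J. rewrite J_mul_p by (try exact Hp; lia). f_equal.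
      destruct (Emat_cases (p * k) (p * e)) as [[H1 ->]|[H1 ->]]; [lia| |];
      destruct (Emat_cases k e) as [[H2 ->]|[H2 ->]]; try lia; try reflexivity.
      + exfalso. apply H2. apply (Nat.mul_divide_cancel_l e k p); [lia|exact H1].
      + exfalso. apply H1. apply Nat.mul_divide_cancel_l; [lia|exact H2]. }
    rewrite HP1, HP2.
    transitivity (Rpower (INR p) s * rsum k (fun e => Emat k e * J e)).
    { rewrite <- rsum_scal, <- rsum_plus. apply rsum_ext. intros. ring. }
    unfold Fsum in IH. fold J in IH. rewrite IH.
    rewrite mult_INR, Rpower_mult_distr; [reflexivity| |]; apply lt_0_INR; lia.
Qed.

Lemma divsum s N m : (1 <= m <= N)%nat ->
  rsum N (fun d => Emat m d * Jordan s d) = Rpower (INR m) s.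
Proof.
  intros H. fold (Fsum s N m). rewrite Fsum_trunc by exact H. apply divsum_main. lia.
Qed.


Lemma gcd_mul_lcm a b : (Nat.gcd a b * Nat.lcm a b = a * b)%nat.
Proof.
  unfold Nat.lcm. destruct (Nat.eq_dec (Nat.gcd a b) 0) as [H0|H0].
  - apply Nat.gcd_eq_0 in H0. destruct H0 as [-> ->]. reflexivity.
  - destruct (Nat.gcd_divide_r a b) as [k Hk].
    remember (Nat.gcd a b) as g. subst b. rewrite Nat.div_mul by exact H0. ring.
Qed.

Lemma Amat_decomp alpha beta i j : (1 <= i)%nat -> (1 <= j)%nat ->
  Amat alpha beta i j =
  Rpower (INR (Nat.gcd i j)) (alpha - beta) * (Rpower (INR i) beta * Rpower (INR j) beta).
Proof.
  intros Hi Hj. unfold Amat.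
  assert (Hg : (Nat.gcd i j <> 0)%nat) by (intros H; apply Nat.gcd_eq_0 in H; lia).
  assert (Hl : (Nat.lcm i j <> 0)%nat) by (intros H; apply Nat.lcm_eq_0 in H; lia).
  replace alpha with ((alpha - beta) + beta) at 1 by ring.
  rewrite Rpower_plus, Rmult_assoc.
  rewrite Rpower_mult_distr by (apply lt_0_INR; lia).
  rewrite <- mult_INR, gcd_mul_lcm, mult_INR.
  rewrite <- Rpower_mult_distr by (apply lt_0_INR; lia). reflexivity.
Qed.

Lemma gcd_sum s n i j : (1 <= i <= n)%nat -> (1 <= j <= n)%nat ->
  Rpower (INR (Nat.gcd i j)) s = rsum n (fun d => Jordan s d * Emat i d * Emat j d).
Proof.
  intros Hi Hj.
  assert (Hg : (Nat.gcd i j <> 0)%nat) by (intros H; apply Nat.gcd_eq_0 in H; lia).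
  assert (Hgi : (Nat.gcd i j <= i)%nat) by (apply Nat.divide_pos_le; [lia|apply Nat.gcd_divide_l]).
  rewrite <- (divsum s n) by lia. apply rsum_ext. intros d Hd.
  destruct (Emat_cases i d) as [[H1 ->]|[H1 ->]]; [lia| |];
  destruct (Emat_cases j d) as [[H2 ->]|[H2 ->]]; try lia;
  destruct (Emat_cases (Nat.gcd i j) d) as [[H3 ->]|[H3 ->]]; try lia; try ring.
  - exfalso. apply H3. apply Nat.gcd_greatest; assumption.
  - exfalso. apply H2. apply (Nat.divide_trans _ (Nat.gcd i j)); [exact H3|apply Nat.gcd_divide_r].
  - exfalso. apply H1. apply (Nat.divide_trans _ (Nat.gcd i j)); [exact H3|apply Nat.gcd_divide_l].
  - exfalso. apply H1. apply (Nat.divide_trans _ (Nat.gcd i j)); [exact H3|apply Nat.gcd_divide_l].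
Qed.

Lemma quad_ext n M M' x : (forall i j, (1 <= i <= n)%nat -> (1 <= j <= n)%nat -> M i j = M' i j) ->
  quad_form n M x = quad_form n M' x.
Proof.
  intros H. unfold quad_form. apply rsum_ext. intros i Hi. apply rsum_ext. intros j Hj.
  rewrite H by assumption. reflexivity.
Qed.

Lemma expand_sq K n (c : nat -> R) (B : nat -> nat -> R) y :
  rsum K (fun k => c k * (rsum n (fun i => B k i * y i) * rsum n (fun i => B k i * y i)))
  = quad_form n (fun i j => rsum K (fun k => c k * B k i * B k j)) y.
Proof.
  unfold quad_form.
  transitivity (rsum K (fun k => rsum n (fun i => rsum n (fun j => y i * (c k * B k i * B k j) * y j)))).
  { apply rsum_ext; intros k _. rewrite rsum_mult. rewrite <- (rsum_scal n (c k)).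
    apply rsum_ext; intros i _. rewrite <- (rsum_scal n (c k)). apply rsum_ext; intros; ring. }
  rewrite rsum_swap. apply rsum_ext; intros i _. rewrite rsum_swap. apply rsum_ext; intros j _.
  transitivity (rsum K (fun k => (y i * y j) * (c k * B k i * B k j))).
  { apply rsum_ext; intros; ring. }
  rewrite rsum_scal. ring.
Qed.

Lemma ET_inj n v : (forall d, (1 <= d <= n)%nat -> rsum n (fun i => Emat i d * v i) = 0) ->
  forall i, (1 <= i <= n)%nat -> v i = 0.
Proof.
  intros H.
  assert (Hk : forall k d, (1 <= d <= n)%nat -> (n < d + k)%nat -> v d = 0).
  { induction k; intros d Hd Hdk; [lia|].
    destruct (lt_dec n (d + k)) as [Hl|Hl]; [apply IHk; assumption|].
    pose proof (H d Hd) as Hd0. rewrite (rsum_single n d) in Hd0 by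
      (first [lia | intros i Hi Hid; destruct (lt_dec i d);
       [rewrite Emat_gt by lia; ring | rewrite (IHk i) by lia; ring]]).
    rewrite Emat_diag in Hd0 by lia. lra. }
  intros i Hi. apply (Hk n i Hi). lia.
Qed.

Lemma E_inj n w : (forall k, (1 <= k <= n)%nat -> rsum n (fun d => Emat k d * w d) = 0) ->
  forall i, (1 <= i <= n)%nat -> w i = 0.
Proof.
  intros H.
  assert (Hm : forall m i, (1 <= i <= n)%nat -> (i <= m)%nat -> w i = 0).
  { induction m; intros i Hi Him; [lia|].
    destruct (le_lt_dec i m) as [Hl|Hl]; [apply IHm; assumption|].
    pose proof (H i Hi) as Hd0. rewrite (rsum_single n i) in Hd0 by
      (first [lia | intros d Hd Hdi; destruct (lt_dec d i);
       [rewrite (IHm d) by lia; ring | rewrite Emat_gt by lia; ring]]).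
    rewrite Emat_diag in Hd0 by lia. lra. }
  intros i Hi. apply (Hm i i Hi). lia.
Qed.

Lemma rmin1_le m f i : (1 <= i <= S m)%nat -> rmin1 m f <= f i.
Proof.
  induction m; intros Hi; simpl.
  - replace i with 1%nat by lia. lra.
  - destruct (Nat.eq_dec i (S (S m))) as [->|Hne]; [apply Rmin_r|].
    pose proof (Rmin_l (rmin1 m f) (f (S (S m)))). pose proof (IHm ltac:(lia)). lra.
Qed.

Lemma rmin1_pos m f : (forall i, (1 <= i <= S m)%nat -> 0 < f i) -> 0 < rmin1 m f.
Proof.
  induction m; intros H; simpl.
  - apply H. lia.
  - apply Rmin_glb_lt; [apply IHm; intros; apply H; lia|apply H; lia].
Qed.

Lemma exp_le x y : x <= y -> exp x <= exp y.
Proof. intros [H|H]; [left; apply exp_increasing; exact H|rewrite H; lra]. Qed.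

Lemma ln_le' x y : 0 < x -> x <= y -> ln x <= ln y.
Proof. intros Hx [H|H]; [left; apply ln_increasing; assumption|rewrite H; lra]. Qed.

Lemma pow_bound n i beta : (1 <= i <= n)%nat ->
  Rmin 1 (Rpower (INR n) (2 * beta)) <= Rpower (INR i) beta * Rpower (INR i) beta.
Proof.
  intros Hi. rewrite <- Rpower_plus. replace (beta + beta) with (2 * beta) by ring.
  assert (H1 : 1 <= INR i) by (apply (le_INR 1); lia).
  assert (H2 : INR i <= INR n) by (apply le_INR; lia).
  assert (Hl0 : 0 <= ln (INR i)) by (rewrite <- ln_1; apply ln_le'; lra).
  assert (Hl1 : ln (INR i) <= ln (INR n)) by (apply ln_le'; lra).
  unfold Rpower.
  destruct (Rle_or_lt 0 beta) as [Hb|Hb].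
  - apply (Rle_trans _ 1); [apply Rmin_l|]. rewrite <- exp_0. apply exp_le. nra.
  - apply (Rle_trans _ (exp (2 * beta * ln (INR n)))); [apply Rmin_r|]. apply exp_le. nra.
Qed.


Definition Nmat n (i j : nat) : R := rsum n (fun k => 1 * Emat i k * Emat j k).

Lemma EtE_sym n : symmetric_mat n (EtE n).
Proof. intros i j _ _. unfold EtE. apply rsum_ext. intros. ring. Qed.

Lemma Nmat_sym n : symmetric_mat n (Nmat n).
Proof. intros i j _ _. unfold Nmat. apply rsum_ext. intros. ring. Qed.

Lemma quad_EtE_sq n u :
  quad_form n (EtE n) u =
  rsum n (fun k => 1 * (rsum n (fun d => Emat k d * u d) * rsum n (fun d => Emat k d * u d))).
Proof.
  rewrite (expand_sq n n (fun _ => 1) (fun k d => Emat k d) u).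
  apply quad_ext. intros. unfold EtE. apply rsum_ext. intros. ring.
Qed.

Lemma quad_N_sq n v :
  quad_form n (Nmat n) v =
  rsum n (fun d => 1 * (rsum n (fun i => Emat i d * v i) * rsum n (fun i => Emat i d * v i))).
Proof.
  rewrite (expand_sq n n (fun _ => 1) (fun d i => Emat i d) v). reflexivity.
Qed.

Lemma tn_pos n t : (1 <= n)%nat ->
  (exists w, norm2 n w = 1 /\ quad_form n (EtE n) w = t) -> 0 < t.
Proof.
  intros Hn [w [Hw Ht]]. rewrite quad_EtE_sq in Ht.
  set (z := fun k => rsum n (fun d => Emat k d * w d)) in Ht.
  assert (Hz : t = norm2 n z) by (rewrite <- Ht; apply rsum_ext; intros; unfold z; ring).
  pose proof (norm2_nonneg n z).
  destruct (Req_dec t 0) as [H0|H0]; [|lra].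
  exfalso. rewrite H0 in Hz. symmetry in Hz.
  pose proof (E_inj n w (rsum_sq_zero n z Hz)) as Hw0.
  assert (norm2 n w = 0) by (apply rsum_zero'; intros; rewrite Hw0 by assumption; ring).
  lra.
Qed.

Lemma key_lemma n t : (1 <= n)%nat ->
  (forall x, quad_form n (EtE n) x >= t * norm2 n x) ->
  forall y, quad_form n (Nmat n) y >= t * norm2 n y.
Proof.
  intros Hn Ht y.
  destruct (rayleigh n (Nmat n) Hn (Nmat_sym n)) as [v [mu [Hv [Hq [Hall Heig]]]]].
  set (u := fun d => rsum n (fun i => Emat i d * v i)).
  assert (Hnu : norm2 n u = mu).
  { rewrite <- Hq, quad_N_sq. apply rsum_ext. intros. unfold u. ring. }
  assert (Hw : forall k, (1 <= k <= n)%nat -> rsum n (fun d => Emat k d * u d) = mu * v k).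
  { intros k Hk. rewrite <- Heig by exact Hk. unfold u, matvec, Nmat.
    transitivity (rsum n (fun d => rsum n (fun i => Emat k d * Emat i d * v i))).
    { apply rsum_ext. intros. rewrite <- rsum_scal. apply rsum_ext. intros. ring. }
    rewrite rsum_swap. apply rsum_ext. intros i _.
    transitivity (rsum n (fun d => v i * (1 * Emat k d * Emat i d))).
    { apply rsum_ext. intros. ring. }
    rewrite rsum_scal. ring. }
  assert (HEu : quad_form n (EtE n) u = mu * mu).
  { rewrite quad_EtE_sq.
    transitivity (rsum n (fun k => mu * mu * (v k * v k))).
    { apply rsum_ext. intros k Hk. rewrite Hw by exact Hk. ring. }
    rewrite rsum_scal. fold (norm2 n v). rewrite Hv. ring. }
  pose proof (Ht u) as H1. rewrite HEu, Hnu in H1.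
  pose proof (norm2_nonneg n u) as Hmu0. rewrite Hnu in Hmu0.
  assert (Hmu : 0 < mu).
  { destruct (Req_dec mu 0) as [H0|H0]; [|lra]. exfalso.
    rewrite H0 in Hnu.
    assert (Hv0 : forall i, (1 <= i <= n)%nat -> v i = 0).
    { apply ET_inj. intros d Hd. apply (rsum_sq_zero n u Hnu d Hd). }
    assert (norm2 n v = 0) by (apply rsum_zero'; intros; rewrite Hv0 by assumption; ring).
    lra. }
  assert (Hmt : t <= mu).
  { apply (Rmult_le_reg_r mu); [exact Hmu|]. lra. }
  pose proof (Hall y). pose proof (norm2_nonneg n y).
  assert (t * norm2 n y <= mu * norm2 n y) by (apply Rmult_le_compat_r; assumption).
  lra.
Qed.

Lemma quad_A_decomp n alpha beta x :
  quad_form n (Amat alpha beta) x =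
  rsum n (fun d => Jordan (alpha - beta) d *
     (rsum n (fun i => Emat i d * (x i * Rpower (INR i) beta)) *
      rsum n (fun i => Emat i d * (x i * Rpower (INR i) beta)))).
Proof.
  rewrite (expand_sq n n (Jordan (alpha - beta)) (fun d i => Emat i d)).
  unfold quad_form. apply rsum_ext. intros i Hi. apply rsum_ext. intros j Hj.
  rewrite Amat_decomp by lia. rewrite (gcd_sum (alpha - beta) n i j) by assumption. ring.
Qed.

Theorem theorem3p1 (n : nat) (alpha beta : R) :
  (1 <= n)%nat -> alpha > beta ->
  sym_pos_def n (Amat alpha beta) /\
  exists lam1 tn : R,
    is_smallest_eigenvalue n (Amat alpha beta) lam1 /\
    is_smallest_eigenvalue n (EtE n) tn /\
    lam1 >= tn * min_1_to n (Jordan (alpha - beta))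
               * Rmin 1 (Rpower (INR n) (2 * beta)) /\
    tn * min_1_to n (Jordan (alpha - beta))
       * Rmin 1 (Rpower (INR n) (2 * beta)) > 0.
Proof.
  intros Hn Hab.
  assert (Hs : 0 < alpha - beta) by lra.
  destruct (smallest_eig n (EtE n) Hn (EtE_sym n)) as [t [Hts [HtAll Htw]]].
  pose proof (tn_pos n t Hn Htw) as Htpos.
  set (mJ := min_1_to n (Jordan (alpha - beta))).
  assert (HmJ : 0 < mJ).
  { unfold mJ, min_1_to. apply rmin1_pos. intros i Hi. apply J_pos; [exact Hs|lia]. }
  assert (HmJle : forall d, (1 <= d <= n)%nat -> mJ <= Jordan (alpha - beta) d).
  { intros d Hd. unfold mJ, min_1_to. apply rmin1_le. lia. }
  set (c := Rmin 1 (Rpower (INR n) (2 * beta))).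
  assert (Hc : 0 < c) by (apply Rmin_glb_lt; [lra|apply Rpower_pos]).
  assert (HsymA : symmetric_mat n (Amat alpha beta)).
  { intros i j _ _. unfold Amat. rewrite Nat.gcd_comm, Nat.lcm_comm. reflexivity. }
  assert (HB : forall x, quad_form n (Amat alpha beta) x >= t * mJ * c * norm2 n x).
  { intros x.
    set (y := fun i => x i * Rpower (INR i) beta).
    rewrite quad_A_decomp. fold y.
    set (z := fun d => rsum n (fun i => Emat i d * y i)).
    change (rsum n (fun d => Jordan (alpha - beta) d * (z d * z d)) >= t * mJ * c * norm2 n x).
    assert (H1 : rsum n (fun d => mJ * (1 * (z d * z d))) <=
                 rsum n (fun d => Jordan (alpha - beta) d * (z d * z d))).
    { apply rsum_le. intros d Hd. pose proof (HmJle d Hd).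
      assert (0 <= z d * z d) by nra. nra. }
    rewrite rsum_scal in H1. unfold z in H1. rewrite <- quad_N_sq in H1.
    pose proof (key_lemma n t Hn HtAll y) as H2.
    assert (H3 : c * norm2 n x <= norm2 n y).
    { unfold norm2. rewrite <- rsum_scal. apply rsum_le. intros i Hi. unfold y.
      pose proof (pow_bound n i beta Hi). fold c in H.
      assert (0 <= x i * x i) by nra. nra. }
    pose proof (norm2_nonneg n x).
    assert (mJ * (t * (c * norm2 n x)) <= mJ * (t * norm2 n y)).
    { apply Rmult_le_compat_l; [lra|]. apply Rmult_le_compat_l; [lra|exact H3]. }
    assert (mJ * (t * norm2 n y) <= mJ * quad_form n (Nmat n) y).
    { apply Rmult_le_compat_l; lra. }
    unfold z in *. lra. }
  split.
  - split; [exact HsymA|]. intros x Hx. pose proof (nonzero_norm2 n x Hx).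
    pose proof (HB x). assert (0 < t * mJ * c) by (repeat apply Rmult_lt_0_compat; assumption).
    nra.
  - destruct (smallest_eig n (Amat alpha beta) Hn HsymA) as [lam [Hls [_ [v [Hv Hlv]]]]].
    exists lam, t. split; [exact Hls|]. split; [exact Hts|]. split.
    + rewrite <- Hlv. pose proof (HB v) as H. rewrite Hv in H. fold mJ c. lra.
    + fold mJ c. apply Rlt_gt. repeat apply Rmult_lt_0_compat; assumption.
Qed.
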